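(* In the process described in the context, for any item $j$ we have $\Pr[j\in\mathcal R_2\mid j\in\mathcal R_1]=1-o(1)$ as $k\to\infty$.
   Context: Consider a $k$-CS-PIP instance: matrix $\vec A\in[0,1]^{m\times n}$ (entries $a_{ij}$), each column having at most $k$ nonzero entries, and an optimal solution $\vec x$ of the LP $\max\{\vec w\cdot\vec x:\vec A\vec x\le\vec 1,\ \sum_{j\in\mathrm{big}(i)}x_j\le1\ \forall i,\ \vec x\in[0,1]^n\}$. Let $\alpha=k^{0.4}$, $\ell=80\log(k/\alpha)$, and for row $i$: $\mathrm{big}(i)=\{j:a_{ij}>1/2\}$, $\mathrm{med}(i)=\{j:1/\ell\le a_{ij}\le 1/2\}$, $\mathrm{tiny}(i)=\{j:0<a_{ij}<1/\ell\}$. Let $\mathcal R_0$ contain each item $j$ independently with probability $\alpha x_j/k$. For $j\in\mathcal R_0$: a medium blocking event occurs for $j$ if some row $i$ with $j\in\mathrm{med}(i)$ has $|\mathrm{med}(i)\cap\mathcal R_0|\ge 3$; a tiny blocking event occurs for $j$ if some row $i$ with $j\in\mathrm{tiny}(i)$ has $\sum_{j'\ne j,\ j'\in(\mathrm{med}(i)\cup\mathrm{tiny}(i))\cap\mathcal R_0}a_{ij'}>1-a_{ij}$ or $|\mathrm{med}(i)\cap\mathcal R_0|\ge2$. Let $\mathcal R_1$ be the items of $\mathcal R_0$ for which neither event occurs. Build a directed graph $G$ on vertex set $\mathcal R_1$ with an edge $j\to j'$ ($j'\ne j$) iff there is a row $i$ with $a_{ij}>0$ and $a_{ij'}>1/2$.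 Let $d=\alpha+\sqrt{\alpha\log\alpha}$ and let $\mathcal R_2$ be the set of items of $\mathcal R_1$ whose out-degree in $G$ is at most $d$. *)

(* Defs.v *)
From HB Require Import structures.
From mathcomp Require Import all_boot all_order all_algebra.
From mathcomp Require Import all_classical all_reals all_analysis.
Set Implicit Arguments. Unset Strict Implicit. Unset Printing Implicit Defensive.
Import Order.TTheory GRing.Theory Num.Theory.
Local Open Scope ring_scope.

Section CSPIP.
Variables (R : realType) (k m n : nat).
Implicit Types (A : 'M[R]_(m, n)) (w x : 'I_n -> R) (S : {set 'I_n}).

Definition alpha : R := powR (k%:R) (2 / 5).
Definition ell : R := 80 * ln (k%:R / alpha).
Definition dbound : R := alpha + Num.sqrt (alpha * ln alpha).

Definition cs_instance A : Prop :=
  (forall i j, 0 <= A i j <= 1) /\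
  (forall j : 'I_n, (#|[set i : 'I_m | A i j != 0%R]| <= k)%N).

Definition big_set A (i : 'I_m) : {set 'I_n} := [set j | 1 / 2 < A i j].
Definition med_set A (i : 'I_m) : {set 'I_n} := [set j | (1 / ell <= A i j) && (A i j <= 1 / 2)].
Definition tiny_set A (i : 'I_m) : {set 'I_n} := [set j | (0 < A i j) && (A i j < 1 / ell)].

Definition lp_feasible A (y : 'I_n -> R) : Prop :=
  (forall j, 0 <= y j <= 1) /\
  (forall i : 'I_m, \sum_(j < n) A i j * y j <= 1) /\
  (forall i : 'I_m, \sum_(j in big_set A i) y j <= 1).

Definition lp_optimal A w x : Prop :=
  lp_feasible A x /\
  forall y, lp_feasible A y -> \sum_(j < n) w j * y j <= \sum_(j < n) w j * x j.

(* R0 contains each item j independently with probability alpha x_j / k *)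
Definition pinc x (j : 'I_n) : R := alpha * x j / k%:R.
Definition probR0 x S : R :=
  (\prod_(j in S) pinc x j) * (\prod_(j in ~: S) (1 - pinc x j)).
Definition prob x (E : {set 'I_n} -> bool) : R :=
  \sum_(S : {set 'I_n} | E S) probR0 x S.

Definition med_block A S (j : 'I_n) : bool :=
  [exists i : 'I_m, (j \in med_set A i) && (3 <= #|med_set A i :&: S|)%N].
Definition tiny_block A S (j : 'I_n) : bool :=
  [exists i : 'I_m, (j \in tiny_set A i) &&
     ((1 - A i j < \sum_(j' in (med_set A i :|: tiny_set A i) :&: S | j' != j) A i j')
      || (2 <= #|med_set A i :&: S|)%N)].

Definition R1 A S : {set 'I_n} :=
  [set j in S | ~~ med_block A S j && ~~ tiny_block A S j].

Definition out_nbrs A S (j : 'I_n) : {set 'I_n} :=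
  [set j' in R1 A S | (j' != j) && [exists i : 'I_m, (0 < A i j) && (1 / 2 < A i j')]].

Definition R2 A S : {set 'I_n} :=
  [set j in R1 A S | #|out_nbrs A S j|%:R <= dbound].

End CSPIP.

(* Main.v *)
Require Import Defs.
From HB Require Import structures.
From mathcomp Require Import all_boot all_order all_algebra.
From mathcomp Require Import all_classical all_reals all_analysis.
Import Order.TTheory GRing.Theory Num.Theory.
Local Open Scope ring_scope.
From mathcomp Require Import ring lra.

Set Implicit Arguments. Unset Strict Implicit. Unset Printing Implicit Defensive.
Import Order.TTheory GRing.Theory Num.Theory.
Local Open Scope ring_scope.

Section Prod.
Variables (R : realType) (T : finType) (p : T -> R).
Hypothesis hp : forall a, 0 <= p a <= 1.

Definition PP (S : {set T}) : R := \prod_(j in S) p j * \prod_(j in ~: S) (1 - p j).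
Definition EE (F : {set T} -> R) : R := \sum_(S : {set T}) PP S * F S.
Definition QQ a (S : {set T}) : R :=
  \prod_(j in S) p j * \prod_(j | (j \notin S) && (j != a)) (1 - p j).

Lemma p_ge0 a : 0 <= p a. Proof. by case/andP: (hp a). Qed.
Lemma p_le1 a : 0 <= 1 - p a. Proof. by case/andP: (hp a) => _; rewrite subr_ge0. Qed.

Lemma PP_ge0 (S : {set T}) : 0 <= PP S.
Proof. by apply: mulr_ge0; apply: prodr_ge0 => i _; [exact: p_ge0|exact: p_le1]. Qed.

Lemma QQ_ge0 a (S : {set T}) : 0 <= QQ a S.
Proof. by apply: mulr_ge0; apply: prodr_ge0 => i _; [exact: p_ge0|exact: p_le1]. Qed.

Lemma PP_out a (S : {set T}) : a \notin S -> PP S = (1 - p a) * QQ a S.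
Proof.
move=> aS; rewrite /PP /QQ [X in _ * X](bigD1 a) /=; last by rewrite inE.
rewrite mulrCA; congr (_ * (_ * _)); apply: eq_bigl => j; by rewrite inE.
Qed.

Lemma PP_in a (S : {set T}) : a \notin S -> PP (a |: S) = p a * QQ a S.
Proof.
move=> aS; rewrite /PP /QQ big_setU1 //= -mulrA; congr (_ * (_ * _)).
apply: eq_bigl => j; rewrite !inE negb_or andbC; by [].
Qed.

Lemma sum_in (a : T) (G : {set T} -> R) :
  \sum_(S : {set T} | a \in S) G S = \sum_(S : {set T} | a \notin S) G (a |: S).
Proof.
rewrite (reindex_onto (fun S => a |: S) (fun S => S :\ a)) /=; last first.
  by move=> S aS; rewrite finset.setD1K.
apply: eq_bigl => S; rewrite setU11 /=.
apply/eqP/idP.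
  by move=> <-; rewrite !inE eqxx.
by move=> aS; rewrite finset.setU1K.
Qed.

Lemma sum_split (a : T) (G : {set T} -> R) :
  \sum_(S : {set T}) G S = \sum_(S : {set T} | a \notin S) (G (a |: S) + G S).
Proof. by rewrite (bigID (fun S : {set T} => a \in S)) /= sum_in big_split. Qed.

Lemma step (a : T) (F : {set T} -> R) : (forall S : {set T}, a \notin S -> F (a |: S) <= F S) ->
  \sum_(S : {set T}) PP S * ((a \in S)%:R * F S) <= p a * EE F.
Proof.
move=> hF; rewrite /EE (sum_split a) [X in _ <= _ * X](sum_split a) mulr_sumr.
apply: ler_sum => S aS.
rewrite (@PP_in a S aS) (@PP_out a S aS) setU11 (negbTE aS) mul1r mul0r mulr0 addr0.
have := hF S aS; have := p_ge0 a; have := p_le1 a; have := QQ_ge0 a S.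
set q := QQ a S; set x := F (a |: S); set y := F S; set pa := p a => h1 h2 h3 h4.
have : 0 <= pa * (1 - pa) * q * (y - x).
  by apply: mulr_ge0; [apply: mulr_ge0; [apply: mulr_ge0|]|rewrite subr_ge0].
nra.
Qed.

Lemma EE_ge0 g : (forall S, 0 <= g S) -> 0 <= EE g.
Proof. by move=> hg; apply: sumr_ge0 => S _; apply: mulr_ge0 => //; exact: PP_ge0. Qed.

Lemma mgf (t : R) (g : {set T} -> R) : 0 <= t -> (forall S, 0 <= g S) ->
  forall V : {set T},
  (forall a (S : {set T}), a \in V -> a \notin S -> g (a |: S) <= g S) ->
  EE (fun S => (1 + t) ^+ #|S :&: V| * g S) <= \prod_(a in V) (1 + t * p a) * EE g.
Proof.
move=> t0 g0 V.
elim: {V}#|V| {-2}V (erefl #|V|) => [|n IH] V hV hg.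
  have -> : V = finset.set0 by apply/eqP; rewrite -cards_eq0 hV.
  rewrite finset.big_set0 mul1r /EE; apply: ler_sum => S _.
  by rewrite finset.setI0 cards0 expr0 mul1r.
have /finset.set0Pn [a aV] : V != finset.set0 by rewrite -cards_eq0 hV.
set V' := V :\ a.
have hV' : #|V'| = n by move: hV; rewrite (cardsD1 a) aV add1n => -[].
have hg' : forall b (S : {set T}), b \in V' -> b \notin S -> g (b |: S) <= g S.
  by move=> b S; rewrite inE => /andP [_ bV]; exact: hg.
have IH' := IH V' hV' hg'.
set F := fun S => (1 + t) ^+ #|S :&: V'| * g S.
have eqF : forall S, (1 + t) ^+ #|S :&: V| * g S = F S + t * ((a \in S)%:R * F S).
  move=> S; rewrite /F (cardsD1 a (S :&: V)) !inE aV andbT.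
  have -> : (S :&: V) :\ a = S :&: V'.
    by apply/setP => b; rewrite !inE; case: (b == a); rewrite ?andbF.
  case: (a \in S); rewrite ?add1n ?add0n ?exprS /=.
    by rewrite mul1r -mulrA mulrDl mul1r.
  by rewrite mul0r mulr0 addr0.
have stepF : \sum_(S : {set T}) PP S * ((a \in S)%:R * F S) <= p a * EE F.
  apply: step => S aS; rewrite /F.
  have -> : (a |: S) :&: V' = S :&: V'.
    apply/setP => b; rewrite !inE; case: (eqVneq b a) => // ->; rewrite ?eqxx /=. by rewrite andbF.
  have e0 : 0 <= (1 + t) ^+ #|S :&: V'| by apply: exprn_ge0; lra.
  exact: (ler_wpM2l e0 (hg _ _ aV aS)).
have -> : EE (fun S => (1 + t) ^+ #|S :&: V| * g S) =
          EE F + t * \sum_(S : {set T}) PP S * ((a \in S)%:R * F S).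
  rewrite /EE mulr_sumr -big_split /=; apply: eq_bigr => S _; rewrite eqF; ring.
rewrite (bigD1 a) //=.
have -> : \prod_(i in V | i != a) (1 + t * p i) = \prod_(i in V') (1 + t * p i).
  by apply: eq_bigl => b; rewrite !inE andbC.
have EF0 : 0 <= EE F.
  apply: EE_ge0 => S; apply: mulr_ge0 => //; apply: exprn_ge0; lra.
have pa0 := p_ge0 a.
apply: (@le_trans _ _ ((1 + t * p a) * EE F)).
  have : t * \sum_(S : {set T}) PP S * ((a \in S)%:R * F S) <= t * (p a * EE F) by apply: ler_wpM2l.
  lra.
rewrite -mulrA; apply: ler_wpM2l => //; nra.
Qed.

End Prod.

Unset Implicit Arguments.

Section Main.
Variables (R : realType) (k m n : nat) (A : 'M[R]_(m, n)).
Hypothesis A0 : forall i j, 0 <= A i j.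

Lemma med_mono (S S' : {set 'I_n}) j :
  S \subset S' -> med_block k A S j -> med_block k A S' j.
Proof.
move=> sS /existsP [i /andP [ji h]]; apply/existsP; exists i; rewrite ji /=.
apply: (leq_trans h); apply: subset_leq_card; exact: finset.setIS.
Qed.

Lemma tiny_mono (S S' : {set 'I_n}) j :
  S \subset S' -> tiny_block k A S j -> tiny_block k A S' j.
Proof.
move=> sS /existsP [i /andP [ji /orP h]]; apply/existsP; exists i; rewrite ji /=.
have sub : (med_set k A i :|: tiny_set k A i) :&: S \subset
           (med_set k A i :|: tiny_set k A i) :&: S' by exact: finset.setIS.
case: h => h; apply/orP; [left|right].
  apply: (lt_le_trans h).
  rewrite [X in X <= _]big_mkcond [X in _ <= X]big_mkcond /=.
  apply: ler_sum => j' _; case: ifP => [/andP [h1 h2]|_].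
    by rewrite (fintype.subsetP sub _ h1) h2.
  by case: ifP => // _; exact: A0.
apply: (leq_trans h); apply: subset_leq_card; exact: finset.setIS.
Qed.

Lemma D_dec (a j : 'I_n) (S : {set 'I_n}) : a != j ->
  j \in R1 k A (a |: S) -> j \in R1 k A S.
Proof.
move=> aj; rewrite !inE => /andP [/orP jS /andP [hm ht]].
have jS' : j \in S by case: jS => // /eqP ja; rewrite ja eqxx in aj.
have sS : S \subset a |: S by exact: finset.subsetUr.
rewrite jS' /=; apply/andP; split.
  by apply/negP => hb; move/negP: hm; apply; exact: med_mono hb.
by apply/negP => hb; move/negP: ht; apply; exact: tiny_mono hb.
Qed.

Definition Nb (j : 'I_n) : {set 'I_n} :=
  [set j' | (j' != j) && [exists i, (0 < A i j) && (1 / 2 < A i j')]].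

Lemma out_sub S j : out_nbrs k A S j \subset S :&: Nb j.
Proof.
apply/fintype.subsetP => j'; rewrite !inE => /andP [/andP [j'S _] ->]; by rewrite j'S.
Qed.

Lemma sum_Nb (x : 'I_n -> R) : (forall j, 0 <= x j) -> cs_instance k A ->
  (forall i, \sum_(j in Defs.big_set A i) x j <= 1) ->
  forall j, \sum_(a in Nb j) x a <= k%:R.
Proof.
move=> hx [_ hcs] hbig j.
set I0 := [set i : 'I_m | A i j != 0].
apply: (@le_trans _ _ (\sum_(a in Nb j) \sum_(i in I0) (a \in Defs.big_set A i)%:R * x a)).
  apply: ler_sum => a; rewrite inE => /andP [_ /existsP [i /andP [hi ha]]].
  rewrite (bigD1 i) /=; last by rewrite inE gt_eqF.
  have -> : a \in Defs.big_set A i by rewrite inE.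
  rewrite mul1r lerDl; apply: sumr_ge0 => i' _; apply: mulr_ge0 => //.
rewrite exchange_big /=.
apply: (@le_trans _ _ (\sum_(i in I0) 1)).
  apply: ler_sum => i _.
  apply: (@le_trans _ _ (\sum_a (a \in Defs.big_set A i)%:R * x a)).
    rewrite [X in X <= _]big_mkcond /=; apply: ler_sum => a _.
    by case: ifP => // _; apply: mulr_ge0.
  apply: le_trans (hbig i); rewrite [X in _ <= X]big_mkcond /=.
  by apply: ler_sum => a _; case: ifP; rewrite ?mul1r ?mul0r.
by rewrite sumr_const ler_nat; exact: hcs.
Qed.

Lemma probE (x : 'I_n -> R) (E : {set 'I_n} -> bool) :
  prob k x E = EE (pinc k x) (fun S => (E S)%:R).
Proof.
rewrite /prob /EE big_mkcond /=; apply: eq_bigr => S _.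
by case: (E S); rewrite ?mulr1 ?mulr0.
Qed.

Lemma main_bound (x : 'I_n -> R) (hp : forall a, 0 <= pinc k x a <= 1) (j : 'I_n)
  (t c : R) : 0 <= t -> 0 <= c -> expR c <= 1 + t ->
  \sum_(S | (j \in R1 k A S) && (j \notin R2 k A S)) probR0 k x S <=
  expR (- (c * dbound R k)) * expR (t * \sum_(a in Nb j) pinc k x a) *
  prob k x (fun S => j \in R1 k A S).
Proof.
move=> t0 c0 hc.
set p := pinc k x.
set g := fun S : {set 'I_n} => (j \in R1 k A S)%:R : R.
set N := fun S : {set 'I_n} => #|S :&: Nb j|.
apply: (@le_trans _ _ (\sum_S PP p S * (expR (- (c * dbound R k)) * ((1 + t) ^+ N S * g S)))).
  rewrite big_mkcond /=; apply: ler_sum => S _.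
  case: ifP => [/andP [h1 h2]|_]; last first.
    apply: mulr_ge0; first exact: PP_ge0.
    apply: mulr_ge0; first exact: expR_ge0.
    apply: mulr_ge0; first by apply: exprn_ge0; lra.
    by rewrite /g; case: (_ \in _).
  rewrite /g h1 mulr1.
  have -> : probR0 k x S = PP p S by [].
  rewrite -[X in X <= _]mulr1; apply: ler_wpM2l; first exact: PP_ge0.
  have hd : dbound R k < (N S)%:R.
    move: h2; rewrite inE h1 /= -ltNge => h2; apply: (lt_le_trans h2).
    by rewrite ler_nat; apply: subset_leq_card; exact: out_sub.
  have e1 : expR (c * (N S)%:R) <= (1 + t) ^+ N S.
    rewrite expRM_natr; apply: lerXn2r => //; rewrite ?inE ?nnegrE; [exact: expR_ge0|lra].
  apply: (@le_trans _ _ (expR (- (c * dbound R k)) * expR (c * (N S)%:R))); last first.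
    by apply: ler_wpM2l => //; exact: expR_ge0.
  rewrite -expRD; apply: le_trans (expR_ge1Dx _).
  have : 0 <= c * ((N S)%:R - dbound R k) by apply: mulr_ge0 => //; lra.
  lra.
have g0 : forall S, 0 <= g S by move=> S; rewrite /g; case: (_ \in _).
have hdec : forall a (S : {set 'I_n}), a \in Nb j -> a \notin S -> g (a |: S) <= g S.
  move=> a S; rewrite inE => /andP [aj _] _; rewrite /g.
  case h: (j \in R1 k A (a |: S)); last by case: (_ \in _).
  by rewrite (@D_dec a j S aj h).
rewrite probE.
have -> : \sum_S PP p S * (expR (- (c * dbound R k)) * ((1 + t) ^+ N S * g S)) =
    expR (- (c * dbound R k)) * EE p (fun S => (1 + t) ^+ #|S :&: Nb j| * g S).
  by rewrite /EE mulr_sumr; apply: eq_bigr => S _; rewrite mulrCA.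
rewrite -mulrA; apply: ler_wpM2l; first exact: expR_ge0.
apply: le_trans (mgf hp t0 g0 hdec) _.
apply: ler_wpM2r; first by apply: EE_ge0.
rewrite mulr_sumr expR_sum; apply: ler_prod => a _.
have := (hp a); case/andP => pa0 _.
apply/andP; split; first by nra.
exact: expR_ge1Dx.
Qed.

End Main.

Lemma real_part (R : realType) (eps : R) (k : nat) : 0 < eps ->
  expR (15 / eps) <= k%:R -> 2 <= (k%:R : R) ->
  let a := alpha R k in
  let L := ln a in
  let d := Num.sqrt (a * L) in
  exists t c : R,
  0 <= t /\ 0 <= c /\ expR c <= 1 + t /\ 0 < (k%:R : R) /\ a <= k%:R /\
      (forall mu, mu <= a -> expR (- (c * dbound R k)) * expR (t * mu) <= eps).
Proof.
move=> e0 hk k2 a L d.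
set t := d / (2 * a); set c := d / (2 * a + d); exists t, c.
have k1 : 1 <= (k%:R : R) by lra.
have a1 : 1 <= a.
  rewrite /a /alpha -[X in X <= _](powRr0 (k%:R : R)); apply: ler_powR => //; lra.
have ak : a <= k%:R by rewrite /a /alpha; apply: ler1_powR => //; lra.
have hL : L = 2 / 5 * ln (k%:R : R) by rewrite /L /a /alpha ln_powR.
have lnk : 15 / eps <= ln (k%:R : R).
  rewrite -[X in X <= _](expRK (15 / eps)) ler_ln //; rewrite posrE ?expR_gt0 //; lra.
have L6 : 6 / eps <= L.
  rewrite hL; have -> : 6 / eps = 2 / 5 * (15 / eps) by field; exact: lt0r_neq0.
  by apply: ler_wpM2l => //; lra.
have L0 : 0 <= L.
  by apply: le_trans L6; apply: divr_ge0; lra.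
have La : L <= a.
  have := @le_ln1Dx R (a - 1); have -> : 1 + (a - 1) = a by ring.
  move=> h.
  have := h ltac:(lra); rewrite /L; lra.
have d0 : 0 <= d by exact: sqrtr_ge0.
have dd : d ^+ 2 = a * L by rewrite /d sqr_sqrtr //; apply: mulr_ge0; lra.
have da : d <= a by nra.
have a0 : 0 < a by lra.
have t0 : 0 <= t by rewrite /t; apply: divr_ge0; lra.
have c0 : 0 <= c by rewrite /c; apply: divr_ge0; lra.
have id1 : (1 + t) * (1 - c) = 1 by rewrite /t /c; field; apply/andP; split; apply: lt0r_neq0; lra.
split; first done. split; first done. split.
- have h1 := expR_ge1Dx (- c).
  have h2 := expRxMexpNx_1 c.
  have h3 := expR_gt0 c.
  have h4 : 0 <= expR c * (1 + t) * (expR (- c) - (1 - c)).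
    apply: mulr_ge0; [apply: mulr_ge0; lra | lra].
  have : expR c = expR c * ((1 + t) * (1 - c)) by rewrite id1 mulr1.
  nra.
split; first lra. split; first done.
move=> mu hmu.
rewrite -expRD.
have key : t * a - c * (a + d) = - (d ^+ 2) / (2 * (2 * a + d)).
  rewrite /t /c; field; apply/andP; split; apply: lt0r_neq0; lra.
have db : dbound R k = a + d by [].
apply: (@le_trans _ _ (expR (- (1 / eps)))).
  rewrite ler_expR db.
  have h1 : t * mu <= t * a by apply: ler_wpM2l.
  have h2 : a * L / (2 * (2 * a + d)) - L / 6 = L * (a - d) / (6 * (2 * a + d)).
    field; apply: lt0r_neq0; lra.
  have h3 : 0 <= L * (a - d) / (6 * (2 * a + d)).
    apply: divr_ge0; [apply: mulr_ge0; lra | lra].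
  have h4 : - (d ^+ 2) / (2 * (2 * a + d)) = - (a * L / (2 * (2 * a + d))).
    by rewrite dd mulNr.
  have h5 : 1 / eps <= L / 6.
    have -> : L / 6 = L * (1 / 6) by rewrite mul1r.
    have -> : 1 / eps = (6 / eps) * (1 / 6) by field; exact: lt0r_neq0.
    by apply: ler_wpM2r => //; lra.
  lra.
have E0 := expR_gt0 (1 / eps).
have E1 := expR_ge1Dx (1 / eps).
have ee : eps * (1 / eps) = 1 by field; exact: lt0r_neq0.
rewrite expRN -div1r ler_pdivrMr //.
nra.
Qed.

Theorem lemma2 (R : realType) (eps : R) : 0 < eps ->
  exists K : nat, forall k : nat, (K <= k)%N ->
  forall (m n : nat) (A : 'M[R]_(m, n)) (w x : 'I_n -> R),
    cs_instance k A -> lp_optimal A w x ->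
    forall j : 'I_n,
      (1 - eps) * prob k x (fun S => j \in R1 k A S)
        <= prob k x (fun S => j \in R2 k A S).
Proof.
move=> e0.
exists (maxn 2 (Num.trunc (expR (15 / eps))).+1).
move=> k hK m n A w x hcs hlp j.
have hk : expR (15 / eps) <= k%:R.
  have h := truncnS_gt (expR (15 / eps)).
  apply/ltW/(lt_le_trans h); rewrite ler_nat; exact: leq_trans (leq_maxr _ _) hK.
have k2 : 2 <= (k%:R : R).
  rewrite (ler_nat R 2 k); exact: leq_trans (leq_maxl _ _) hK.
have [t [c [t0 [c0 [hc [kpos [ak hbound]]]]]]] := @real_part R eps k e0 hk k2.
have [[hx01 [hrow hbig]] _] := hlp.
have A0 : forall i j, 0 <= A i j by move=> i j'; case/andP: (hcs.1 i j').
have al0 : 0 <= alpha R k by exact: powR_ge0.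
have hp : forall a, 0 <= pinc k x a <= 1.
  move=> a; rewrite /pinc; case/andP: (hx01 a) => x0 x1.
  apply/andP; split; first by apply: divr_ge0; [apply: mulr_ge0|lra].
  rewrite ler_pdivrMr // mul1r; nra.
have hmu : \sum_(a in (@Nb R m n A j)) pinc k x a <= alpha R k.
  have -> : \sum_(a in (@Nb R m n A j)) pinc k x a = alpha R k / k%:R * \sum_(a in (@Nb R m n A j)) x a.
    by rewrite mulr_sumr; apply: eq_bigr => a _; rewrite /pinc mulrAC.
  have hs := @sum_Nb R k m n A x (fun a => proj1 (andP (hx01 a))) hcs hbig j.
  apply: (@le_trans _ _ (alpha R k / k%:R * k%:R)).
    by apply: ler_wpM2l => //; apply: divr_ge0; lra.
  by rewrite divfK //; apply: lt0r_neq0.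
have hB := @main_bound R k m n A A0 x hp j t c t0 c0 hc.
have hP1 : 0 <= prob k x (fun S => j \in R1 k A S).
  by rewrite probE; apply: (EE_ge0 hp) => S; case: (_ \in _).
have hsplit : prob k x (fun S => j \in R1 k A S) =
    prob k x (fun S => j \in R2 k A S) +
    \sum_(S | (j \in R1 k A S) && (j \notin R2 k A S)) probR0 k x S.
  rewrite /prob (bigID (fun S : {set 'I_n} => j \in R2 k A S)) /=; congr (_ + _).
  apply: eq_bigl => S; case h: (j \in R2 k A S); rewrite ?andbT ?andbF //.
  by move: h; rewrite inE => /andP [].
have hX := hbound _ hmu.
have : expR (- (c * dbound R k)) * expR (t * \sum_(a in (@Nb R m n A j)) pinc k x a) *
    prob k x (fun S => j \in R1 k A S) <= eps * prob k x (fun S => j \in R1 k A S).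
  by apply: ler_wpM2r.
lra.
Qed.
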